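(* Let $n > m \ge 1$ be integers and let $w = (w_1, \ldots, w_n) \in \mathbb{R}^n$ be a vector of responses, ordered so that units $1, \ldots, m$ are those originally assigned to treatment and units $m+1, \ldots, n$ are those originally assigned to control. A treatment assignment is a vector $\sigma \in \{0,1\}^n$ with exactly $m$ entries equal to $1$ ($\sigma_j = 1$ meaning unit $j$ is assigned to treatment). For $\eta \in \mathbb{R}$ and such an assignment $\sigma$, define $$T_\eta(w, \sigma) := \frac{1}{m}\sum_{j:\sigma_j = 1} \bigl(w_j + \eta \mathbf{1}_{j > m}\bigr) - \frac{1}{n-m}\sum_{j:\sigma_j = 0} \bigl(w_j - \eta \mathbf{1}_{j \le m}\bigr).$$ Let $\sigma_0 = (1, \ldots, 1, 0, \ldots, 0)$ (first $m$ entries equal to $1$) be the original assignment, let $N \ge 1$, and let $\sigma_1, \ldots, \sigma_N$ be any fixed treatment assignments. Define $$P_\eta := \frac{1 + \sum_{j=1}^N \mathbf{1}\{T_\eta(w, \sigma_j) \ge T_\eta(w, \sigma_0)\}}{1 + N}.$$ Then $P_\eta$ is monotonically nondecreasing in $\eta$: for all real $\eta_1 \le \eta_2$, $P_{\eta_1} \le P_{\eta_2}$.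
   Context: This is the two-sample shift problem: under the hypothesized shift $\eta$, a unit originally treated but reassigned to control would have response lower by $\eta$, and a unit originally in control but reassigned to treatment would have response higher by $\eta$; $T_\eta$ is the difference between the treatment-group mean and control-group mean of these adjusted responses. $P_\eta$ is the Monte Carlo randomization $P$-value for the hypothesis that the shift equals $\eta$, computed with the same data $w$ and the same sampled assignments $\sigma_1,\ldots,\sigma_N$ for every $\eta$. *)

(* Defs.v *)
(* Units are indexed by 'I_n (0-based): unit j (0-based) is
   originally treated iff (val j < m), i.e. 1-based index j+1 <= m. *)
From HB Require Import structures.
From mathcomp Require Import all_boot all_order all_algebra.
Set Implicit Arguments. Unset Strict Implicit. Unset Printing Implicit Defensive.
Import Order.TTheory GRing.Theory Num.Theory.
Local Open Scope ring_scope.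

Definition is_assignment (n m : nat) (sigma : {ffun 'I_n -> bool}) : Prop :=
  #|[set j | sigma j]| = m.

Definition sigma0 (n m : nat) : {ffun 'I_n -> bool} := [ffun j => (val j < m)%N].

Definition T_eta (R : realFieldType) (n m : nat) (eta : R) (w : 'I_n -> R)
    (sigma : {ffun 'I_n -> bool}) : R :=
  (m%:R)^-1 * (\sum_(j < n | sigma j) (w j + (if (m <= val j)%N then eta else 0)))
  - ((n - m)%:R)^-1 * (\sum_(j < n | ~~ sigma j) (w j - (if (val j < m)%N then eta else 0))).

Definition P_eta (R : realFieldType) (n m N : nat) (eta : R) (w : 'I_n -> R)
    (sigmas : 'I_N -> {ffun 'I_n -> bool}) : R :=
  (1 + \sum_(k < N) (if T_eta m eta w (sigma0 n m) <= T_eta m eta w (sigmas k)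
                     then 1 else 0)) / (1 + N%:R).

(* Main.v *)
Require Import Defs.
From HB Require Import structures.
From mathcomp Require Import all_boot all_order all_algebra.
From mathcomp Require Import ring lra.
Import Order.TTheory GRing.Theory Num.Theory.
Local Open Scope ring_scope.

Definition cA (R : realFieldType) (n m : nat) (s : {ffun 'I_n -> bool}) : R :=
  \sum_(j < n | s j) (if (m <= val j)%N then 1 else 0).
Definition cB (R : realFieldType) (n m : nat) (s : {ffun 'I_n -> bool}) : R :=
  \sum_(j < n | ~~ s j) (if (val j < m)%N then 1 else 0).

Arguments cA {R n} m s.
Arguments cB {R n} m s.

Lemma T_decomp (R : realFieldType) (n m : nat) (e : R) (w : 'I_n -> R) s :
  T_eta m e w s = T_eta m 0 w s +
     e * ((m%:R)^-1 * cA m s + ((n - m)%:R)^-1 * cB m s).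
Proof.
rewrite /T_eta /cA /cB !big_split /= !mulr_sumr.
have -> : \sum_(j < n | s j) (if (m <= val j)%N then (0:R) else 0) = 0.
  by apply: big1 => j _; case: ifP.
have -> : \sum_(j < n | ~~ s j) - (if (val j < m)%N then (0:R) else 0) = 0.
  by apply: big1 => j _; case: ifP => _; rewrite oppr0.
have -> : \sum_(j < n | s j) (if (m <= val j)%N then e else 0)
   = \sum_(j < n | s j) (e * (if (m <= val j)%N then 1 else 0)).
  by apply: eq_bigr => j _; case: ifP => _; rewrite ?mulr1 ?mulr0.
have -> : \sum_(j < n | ~~ s j) - (if (val j < m)%N then e else 0)
   = - \sum_(j < n | ~~ s j) (e * (if (val j < m)%N then 1 else 0)).
  rewrite -sumrN; apply: eq_bigr => j _; case: ifP => _; rewrite ?mulr1 ?mulr0 //.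
rewrite -!mulr_sumr; ring.
Qed.

Lemma cA0 (R : realFieldType) n m : @cA R n m (sigma0 n m) = 0.
Proof. by apply: big1 => j; rewrite ffunE => hj; rewrite leqNgt hj. Qed.
Lemma cB0 (R : realFieldType) n m : @cB R n m (sigma0 n m) = 0.
Proof. by apply: big1 => j; rewrite ffunE => /negbTE ->. Qed.

Theorem mainTheorem1 (R : realFieldType) (n m N : nat)
  (hm : (1 <= m)%N) (hmn : (m < n)%N) (hN : (1 <= N)%N)
  (w : 'I_n -> R) (sigmas : 'I_N -> {ffun 'I_n -> bool})
  (hsig : forall k, is_assignment m (sigmas k))
  (eta1 eta2 : R) (heta : eta1 <= eta2) :
  P_eta m eta1 w sigmas <= P_eta m eta2 w sigmas.
Proof.
rewrite /P_eta; apply: ler_wpM2r.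
  by rewrite invr_ge0 addr_ge0.
rewrite lerD2l; apply: ler_sum => k _.
rewrite (T_decomp _ _ m eta1 w (sigmas k)) (T_decomp _ _ m eta2 w (sigmas k))
  (T_decomp _ _ m eta1 w (sigma0 n m)) (T_decomp _ _ m eta2 w (sigma0 n m)) cA0 cB0 !mulr0 !addr0 !mulr0 !addr0.
set c := (_ + _ * cB m (sigmas k)).
have hc : 0 <= c.
  rewrite /c addr_ge0 // mulr_ge0 ?invr_ge0 ?ler0n //;
    by apply: sumr_ge0 => j _; case: ifP.
case: ifP => h1; case: ifP => h2 //; exfalso; move/negbT: h2; rewrite -ltNge => h2.
have : eta1 * c <= eta2 * c by rewrite ler_wpM2r.
move=> h3; move: h1 h2 h3.
move: (eta1 * c) (eta2 * c) => x y; lra.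
Qed.
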